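(* Let $x$ be an indeterminate and let $m,n$ be positive integers with $m\geq n$. Then, as an identity of rational functions in $x$ over $\mathbb{Q}$, \begin{multline*} \sum_{k=0}^{n} \binom{m+k}{k} \binom{m}{k} \binom{n+k}{k} \binom{n}{k} \Biggl\{ \frac{-k}{(x+k)^2} + \frac{1+k \bigl(H_{m+k}^{(1)} +H_{m-k}^{(1)} + H_{n+k}^{(1)} + H_{n-k}^{(1)} -4H_k^{(1)}\bigr)}{x+k} \Biggr\} \\ +\sum_{k=n+1}^{m} \frac{(-1)^{k-n}}{x+k} \binom{m+k}{k} \binom{m}{k} \binom{n+k}{k} \Big/ \binom{k-1}{n} =\frac{x\, (1-x)_{n}\, (1-x)_{m}}{(x)_{n+1}\, (x)_{m+1}}. \end{multline*}
   Context: For non-negative integers $i$ and $n$, the generalized harmonic sum is $H^{(i)}_{n}:=\sum_{j=1}^{n} j^{-i}$ for $n\ge 1$, and $H^{(i)}_{0}:=0$. For $a$ and a non-negative integer $n$, $(a)_n$ denotes the rising factorial: $(a)_0:=1$ and $(a)_n:=a(a+1)\cdots(a+n-1)$ for $n>0$. An empty sum equals $0$. *)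

(* Defs.v *)
From HB Require Import structures.
From mathcomp Require Import all_boot all_order all_algebra.
Set Implicit Arguments. Unset Strict Implicit. Unset Printing Implicit Defensive.
Import Order.TTheory GRing.Theory Num.Theory.
Local Open Scope ring_scope.

Notation RatFun := {fraction {poly rat}}.

Definition xF : RatFun := FracField.tofrac 'X.

Definition cstF (c : rat) : RatFun := FracField.tofrac (c%:P).

Definition harm (i n : nat) : rat := \sum_(1 <= j < n.+1) ((j%:R : rat) ^+ i)^-1.

Definition rising (R : pzRingType) (a : R) (n : nat) : R :=
  \prod_(i < n) (a + i%:R).

(* Main.v *)
Require Import Defs.
From HB Require Import structures.
From mathcomp Require Import all_boot all_order all_algebra.
From mathcomp Require Import ring zify.
From Stdlib Require Import Lia.
Import Order.TTheory GRing.Theory Num.Theory.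
Local Open Scope ring_scope.

Lemma rise_nat (a n : nat) :
  ((\prod_(i < n) (a.+1 + i)) * a`! = (a + n)`!)%N.
Proof.
elim: n => [|n IH]; first by rewrite big_ord0 mul1n addn0.
rewrite big_ord_recr /= mulnAC IH addnS factS; ring.
Qed.

Definition charz (K : fieldType) := forall n : nat, (n.+1%:R : K) != 0.

Lemma natnz (K : fieldType) (hK : charz K) (n : nat) : (0 < n)%N -> (n%:R : K) != 0.
Proof. by case: n => // n _; exact: hK. Qed.
Lemma subnz (K : fieldType) (hK : charz K) (j k : nat) : j != k -> (j%:R - k%:R : K) != 0.
Proof.
move=> hjk; case: (ltngtP j k) => h.
- rewrite -opprB -natrB; last exact: ltnW.
  rewrite oppr_eq0; apply: natnz => //; rewrite subn_gt0 //.
- rewrite -natrB; last exact: ltnW.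
  apply: natnz => //; rewrite subn_gt0 //.
- by rewrite h eqxx in hjk.
Qed.

Definition aco (K : fieldType) (n j : nat) : K :=
  (-1) ^+ j * (('C(n + j, j) * 'C(n, j))%N)%:R.
Definition ff (K : fieldType) (n : nat) (x : K) : K := rising (1 - x) n / rising x n.+1.

Lemma rising_nat (K : fieldType) (a n : nat) :
  rising (a.+1%:R : K) n = (\prod_(i < n) (a.+1 + i))%:R.
Proof. by rewrite /rising natr_prod; apply: eq_bigr => i _; rewrite natrD. Qed.

Lemma rising_neg (K : fieldType) (n t : nat) :
  rising (- ((n.+1 + t)%:R) : K) n.+1 = (-1) ^+ n.+1 * (\prod_(i < n.+1) (t.+1 + i))%:R.
Proof.
rewrite /rising (reindex_inj rev_ord_inj) /=.
rewrite natr_prod.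
have -> : (-1) ^+ n.+1 * \prod_(i < n.+1) ((t.+1 + i)%:R : K) =
   \prod_(i < n.+1) - ((t.+1 + i)%:R : K) by rewrite prodrN card_ord.
apply: eq_bigr => i _.
have hi := ltn_ord i.
have -> : (n.+1 + t = (t.+1 + i) + (n - i))%N by lia.
rewrite subSS natrD; ring.
Qed.

Lemma risingS (K : fieldType) (x : K) n : rising x n.+1 = rising x n * (x + n%:R).
Proof. by rewrite /rising big_ord_recr. Qed.

Lemma aco_rec_nat n j : (j <= n)%N ->
  ('C(n.+1 + j, j) * 'C(n.+1, j) * (n.+1 - j) = 'C(n + j, j) * 'C(n, j) * (n.+1 + j))%N.
Proof.
move=> hj.
have e1 := mul_bin_down (n.+1 + j) j.
have e2 := mul_bin_down n.+1 j.
have h1 : ((n.+1 + j).-1 = n + j)%N by rewrite addSn.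
have h2 : (n.+1 + j - j = n.+1)%N by rewrite addnK.
rewrite h1 h2 /= in e1.
apply/eqP; rewrite -(eqn_pmul2l (ltn0Sn n)); apply/eqP.
have -> : (n.+1 * ('C(n.+1 + j, j) * 'C(n.+1, j) * (n.+1 - j)) =
   (n.+1 * 'C(n.+1 + j, j)) * ((n.+1 - j) * 'C(n.+1, j)))%N by ring.
rewrite -e1 -e2; ring.
Qed.

Lemma aco_rec (K : fieldType) n j : (j <= n)%N ->
  aco K n.+1 j * (n.+1%:R - j%:R) = aco K n j * (n.+1%:R + j%:R).
Proof.
move=> hj.
rewrite /aco -!mulrA; congr (_ * _).
rewrite -natrB; last by lia.
by rewrite -natrD -!natrM aco_rec_nat.
Qed.

Lemma aco_top_nat n :
  ('C(n.+1 + n.+1, n.+1) * 'C(n.+1, n.+1) * \prod_(i < n.+1) (0.+1 + i)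
   = 2 * n.+1 * \prod_(i < n) (n.+2 + i))%N.
Proof.
have e1 := rise_nat n.+1 n.
have e2 := rise_nat 0 n.+1.
have e3 := bin_fact (leq_addr n.+1 n.+1).
rewrite fact0 muln1 add0n in e2.
rewrite addnK in e3.
rewrite binn muln1 e2.
apply/eqP; rewrite -(eqn_pmul2r (fact_gt0 n.+1)); apply/eqP.
rewrite -mulnA e3 -mulnA e1.
have -> : (n.+1 + n.+1 = (n.+1 + n).+1)%N by lia.
rewrite factS; lia.
Qed.

Lemma aco_top (K : fieldType) (hK : charz K) n :
  aco K n.+1 n.+1 = 2%:R * n.+1%:R * ff K n (- n.+1%:R).
Proof.
rewrite /ff opprK nat1r rising_nat.
have := rising_neg K n 0; rewrite addn0 => ->.
have E := congr1 (fun m => m%:R : K) (aco_top_nat n).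
rewrite /= !natrM in E.
set P2 := (\prod_(i < n.+1) (0.+1 + i))%:R in E *.
set P1 := (\prod_(i < n) (n.+2 + i))%:R in E *.
have hP2 : P2 != 0 by rewrite /P2; apply: natnz => //; rewrite prodn_gt0.
have hs : ((-1) ^+ n.+1 : K) != 0 by rewrite signr_eq0.
have -> : P1 = ('C(n.+1 + n.+1, n.+1)%:R * 'C(n.+1, n.+1)%:R * P2) / (2%:R * n.+1%:R).
  rewrite E; field; by rewrite nat1r hK (hK 1%N).
rewrite /aco natrM.
have -> : forall a b c : K, b != 0 -> c != 0 -> 2%:R * n.+1%:R * (a * b / (2%:R * n.+1%:R) / (c * b))
   = a / c.
  move=> a b c hb hc; field; by rewrite ?nat1r hb hc hK (hK 1%N).
  by rewrite invr_sign mulrC.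
all: done.
Qed.

Lemma ff_step (K : fieldType) n (x : K) :
  ff K n.+1 x = ff K n x * ((n.+1%:R - x) / (x + n.+1%:R)).
Proof.
rewrite /ff !risingS invfM mulrACA; congr (_ * (_ / _)).
by rewrite -nat1r; ring.
Qed.

Lemma pfd (K : fieldType) (hK : charz K) n (x : K) :
  (forall i, (i <= n)%N -> x + i%:R != 0) ->
  ff K n x = \sum_(j < n.+1) aco K n j / (x + j%:R).
Proof.
elim: n x => [|n IH] x hx.
  rewrite /ff /rising big_ord0 !big_ord1 /aco /=.
  by rewrite expr0 !mul1r.
have hy : forall i, (i <= n)%N -> - n.+1%:R + i%:R != (0 : K).
  move=> i hi; rewrite addrC; apply: subnz => //; by rewrite neq_ltn ltnS hi.
have hxn : forall i, (i <= n)%N -> x + i%:R != 0.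
  move=> i hi; apply: hx; lia.
rewrite ff_step (IH x hxn) mulr_suml [RHS]big_ord_recr /= aco_top // (IH _ hy).
rewrite mulr_sumr mulr_suml -big_split /=.
apply: eq_bigr => j _.
have hj : (j <= n)%N by rewrite -ltnS.
have h1 := hx j (leqW hj).
have h2 := hx n.+1 (leqnn _).
have h3 : n.+1%:R - j%:R != (0 : K) by apply: subnz => //; rewrite neq_ltn ltnS hj orbT.
have h4 := hy j hj.
have ha : aco K n.+1 j = aco K n j * (n.+1%:R + j%:R) / (n.+1%:R - j%:R).
  by rewrite -aco_rec // mulfK.
rewrite ha.
move: h1 h2 h3 h4; set X := x; set J := (j%:R : K); set N := (n.+1%:R : K);
  set a := aco K n j => h1 h2 h3 h4.
field; by rewrite nat1r h1 h2 h3 h4.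
Qed.

Definition Lf (K : fieldType) n (x : K) :=
  \sum_(i < n.+1) (x + i%:R)^-1 + \sum_(i < n) (i.+1%:R - x)^-1.

Lemma Lf_step (K : fieldType) n (x : K) :
  Lf K n.+1 x = Lf K n x + (x + n.+1%:R)^-1 + (n.+1%:R - x)^-1.
Proof.
rewrite /Lf (big_ord_recr n.+1) (big_ord_recr n (fun i : 'I_n.+1 => (i.+1%:R - x)^-1)) /=.
ring.
Qed.

Lemma tid (K : fieldType) (hK : charz K) n (x : K) :
  (forall i, (i <= n)%N -> x + i%:R != 0) ->
  (forall i, (i < n)%N -> i.+1%:R - x != 0) ->
  \sum_(j < n.+1) aco K n j / (x + j%:R) ^+ 2 = ff K n x * Lf K n x.
Proof.
elim: n x => [|n IH] x hx hx'.
  rewrite /Lf !big_ord1 big_ord0 /ff /rising big_ord0 big_ord1 /aco /=.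
  have h0 := hx 0%N (leqnn 0).
  rewrite expr0 !mul1r addr0; field.
  by move: h0; rewrite /= addr0.
have hy : forall i, (i <= n)%N -> - n.+1%:R + i%:R != (0 : K).
  move=> i hi; rewrite addrC; apply: subnz => //; by rewrite neq_ltn ltnS hi.
have hxn : forall i, (i <= n)%N -> x + i%:R != 0.
  move=> i hi; apply: hx; lia.
have hxn' : forall i, (i < n)%N -> i.+1%:R - x != 0.
  move=> i hi; apply: hx'; lia.
have h2 := hx n.+1 (leqnn _).
have h5 := hx' n (ltnSn _).
set N := (n.+1%:R : K) in h2 h5 hy *.
set y := - N in hy *.
set r := (N - x) / (x + N).
set c := 2%:R * N / (x + N) ^+ 2.
rewrite [LHS]big_ord_recr /= aco_top //.
rewrite (eq_bigr (fun j : 'I_n.+1 => r * (aco K n j / (x + j%:R) ^+ 2) +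
   (c * (aco K n j / (x + j%:R)) - c * (aco K n j / (y + j%:R))))); last first.
  move=> j _.
  have hj : (j <= n)%N by rewrite -ltnS.
  have h1 := hxn j hj.
  have h3 : N - j%:R != (0 : K) by apply: subnz => //; rewrite neq_ltn ltnS hj orbT.
  have h4 := hy j hj.
  have ha : aco K n.+1 j = aco K n j * (N + j%:R) / (N - j%:R).
    by rewrite -aco_rec // mulfK.
  rewrite /= ha /r /c /y.
  move: h1 h2 h3 h4; set J := (j%:R : K); set a := aco K n j => h1 h2' h3 h4.
  rewrite /N; field; by rewrite nat1r h1 h2' h3 h4.
rewrite big_split /= -mulr_sumr sumrB -!mulr_sumr (IH x hxn hxn').
rewrite -(pfd _ hK _ _ hxn) -(pfd _ hK _ _ hy) ff_step Lf_step.
rewrite /r /c /y; move: h2 h5; rewrite /N => h2 h5.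
field; by rewrite nat1r h2 h5.
Qed.

Definition HK (K : fieldType) m : K := \sum_(i < m) (i.+1%:R : K)^-1.
Definition Sd (K : fieldType) n k : K :=
  \sum_(j < n.+1) (if (j : nat) == k then 0 else aco K n j / (j%:R - k%:R)).

Lemma sum_if_drop (K : fieldType) M k (F : nat -> K) : (k < M)%N ->
  \sum_(j < M) (if (j : nat) == k then 0 else F j) = \sum_(j < M) F j - F k.
Proof.
move=> hk.
rewrite [in RHS](bigD1 (Ordinal hk)) //= [in LHS](bigD1 (Ordinal hk)) //= eqxx add0r.
rewrite addrAC subrr add0r; apply: eq_bigr => j hj.
rewrite ifF //; apply/negbTE; apply: contraNneq hj => e; apply/eqP/val_inj.
by rewrite /= e.
Qed.

Lemma HK_S (K : fieldType) m : HK K m.+1 = HK K m + (m.+1%:R)^-1.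
Proof. by rewrite /HK big_ord_recr. Qed.

Lemma HK_add (K : fieldType) a b :
  HK K (a + b) = HK K a + \sum_(i < b) ((a + i).+1%:R)^-1.
Proof. by rewrite /HK big_split_ord. Qed.

Lemma HK_neg (K : fieldType) n :
  \sum_(i < n.+1) (- (n.+1%:R : K) + i%:R)^-1 = - HK K n.+1.
Proof.
rewrite /HK -sumrN (reindex_inj rev_ord_inj) /=.
apply: eq_bigr => i _.
have hi := ltn_ord i.
have e1 : (n.+1%:R : K) = i.+1%:R + (n - i)%:R.
  by rewrite -natrD; congr (_%:R); lia.
by rewrite subSS e1 opprD addrNK invrN.
Qed.

Lemma sid (K : fieldType) (hK : charz K) n k : (k <= n)%N ->
  Sd K n k = - aco K n k * (HK K (n + k) + HK K (n - k) - 2%:R * HK K k).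
Proof.
elim: n k => [|n IH] k hk.
  rewrite leqn0 in hk; move/eqP: hk => ->.
  rewrite /Sd big_ord1 /= /HK big_ord0; ring.
have hy : forall i, (i <= n)%N -> - n.+1%:R + i%:R != (0 : K).
  move=> i hi; rewrite addrC; apply: subnz => //; by rewrite neq_ltn ltnS hi.
have hNz : (n.+1%:R : K) != 0 by apply: hK.
have [->|hkn] : k = n.+1 \/ (k <= n)%N by lia.
- rewrite /Sd big_ord_recr /= eqxx addr0.
  have hy' : forall i, (i < n)%N -> i.+1%:R - (- n.+1%:R) != (0 : K).
    move=> i hi; rewrite opprK -natrD; exact: hK.
  rewrite (eq_bigr (fun j : 'I_n.+1 => - (2%:R * n.+1%:R) * (aco K n j / (- n.+1%:R + j%:R) ^+ 2)
     - aco K n j / (- n.+1%:R + j%:R))); last first.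
    move=> j _.
    have hj : (j <= n)%N by rewrite -ltnS.
    rewrite ifF; last by apply/negbTE; rewrite neq_ltn ltnS hj.
    have h3 : n.+1%:R - j%:R != (0 : K) by apply: subnz => //; rewrite neq_ltn ltnS hj orbT.
    have h4 := hy j hj.
    have ha : aco K n.+1 j = aco K n j * (n.+1%:R + j%:R) / (n.+1%:R - j%:R).
      by rewrite -aco_rec // mulfK.
    rewrite ha.
    move: h3 h4; set J := (j%:R : K); set a := aco K n j => h3 h4.
    field; by rewrite nat1r h3 h4.
  rewrite sumrB -mulr_sumr (tid _ hK _ _ hy hy') -(pfd _ hK _ _ hy) aco_top //.
  rewrite /Lf HK_neg subnn.
  have -> : (n.+1 + n.+1 = (n.+1 + n).+1)%N by rewrite addnS.
  rewrite (HK_S K (n.+1 + n)) HK_add.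
  have -> : \sum_(i < n) (i.+1%:R - - (n.+1%:R : K))^-1 = \sum_(i < n) ((n.+1 + i).+1%:R)^-1.
    by apply: eq_bigr => i _; rewrite opprK -natrD addnC addnS.
  have -> : ((n.+1 + n).+1%:R : K) = 2%:R * n.+1%:R.
    by rewrite -natrM; congr (_%:R); lia.
  rewrite /HK big_ord0.
  field; by rewrite nat1r hNz (hK 1%N).
- have hkk : (n.+1 == k) = false by apply/negbTE; rewrite neq_ltn ltnS hkn orbT.
  rewrite /Sd big_ord_recr /= hkk aco_top //.
  have hNK : n.+1%:R - k%:R != (0 : K) by apply: subnz => //; rewrite hkk.
  rewrite (eq_bigr (fun j : 'I_n.+1 =>
     (n.+1%:R + k%:R) / (n.+1%:R - k%:R) * (if (j : nat) == k then 0 else aco K n j / (j%:R - k%:R))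
     - 2%:R * n.+1%:R / (n.+1%:R - k%:R) * (if (j : nat) == k then 0 else aco K n j / (- n.+1%:R + j%:R))));
   last first.
    move=> j _.
    have hj : (j <= n)%N by rewrite -ltnS.
    have hjn : ((j : nat) == n.+1) = false by apply/negbTE; rewrite neq_ltn ltnS hj.
    case: eqP => [_|/eqP hjk]; first by rewrite !mulr0 subrr.
    have h3 : n.+1%:R - j%:R != (0 : K) by apply: subnz => //; rewrite eq_sym hjn.
    have h4 := hy j hj.
    have h5 : j%:R - k%:R != (0 : K) by apply: subnz.
    have ha : aco K n.+1 j = aco K n j * (n.+1%:R + j%:R) / (n.+1%:R - j%:R).
      by rewrite -aco_rec // mulfK.
    rewrite ha.
    move: h3 h4 h5; set J := (j%:R : K); set a := aco K n j => h3 h4 h5.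
    field; by rewrite nat1r h3 h4 h5 hNK.
  rewrite sumrB -!mulr_sumr.
  have -> : \sum_(j < n.+1) (if (j:nat) == k then 0 else aco K n j / (j%:R - k%:R)) = Sd K n k by [].
  rewrite (@sum_if_drop K n.+1 k (fun j => aco K n j / (- n.+1%:R + j%:R))) // -(pfd _ hK _ _ hy) (IH k hkn).
  have -> : (n.+1 + k = (n + k).+1)%N by rewrite addSn.
  have -> : (n.+1 - k = (n - k).+1)%N by rewrite subSn.
  rewrite (HK_S K (n + k)) (HK_S K (n - k)).
  have -> : ((n + k).+1%:R : K) = n.+1%:R + k%:R by rewrite -natrD addSn.
  have -> : ((n - k).+1%:R : K) = n.+1%:R - k%:R by rewrite -natrB ?subSn // leqW.
  have ha : aco K n.+1 k = aco K n k * (n.+1%:R + k%:R) / (n.+1%:R - k%:R).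
    by rewrite -aco_rec // mulfK.
  rewrite ha.
  have h4 := hy k hkn.
  have h6 : n.+1%:R + k%:R != (0 : K) by rewrite -natrD; apply: hK.
  move: h4 h6 hNK; set Kk := (k%:R : K) => h4 h6 hNK'.
  field; by rewrite nat1r h4 h6 hNK'.
Qed.

Definition Gs (K : fieldType) n k : K :=
  \sum_(j < n.+1) (if (j : nat) == k then 0 else aco K n j / (j%:R - k%:R)).

Lemma sum_if_pick (K : fieldType) M j (c : K) : (j < M)%N ->
  \sum_(k < M) (if j == (k : nat) then c else 0) = c.
Proof.
move=> hj.
rewrite (bigD1 (Ordinal hj)) //= eqxx big1 ?addr0 // => k hk.
rewrite ifF //; apply/negbTE; apply: contraNneq hk => e; apply/eqP/val_inj.
by rewrite /= e.
Qed.

Lemma prod_pfd (K : fieldType) (hK : charz K) n m (x : K) : (n <= m)%N ->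
  (forall i, (i <= m)%N -> x + i%:R != 0) ->
  x * ff K n x * ff K m x =
    \sum_(j < n.+1) (aco K n j * aco K m j * ((x + j%:R)^-1 - j%:R / (x + j%:R) ^+ 2))
  + \sum_(j < n.+1) (- j%:R * aco K n j / (x + j%:R)) * Sd K m j
  + \sum_(k < m.+1) (- k%:R * aco K m k / (x + k%:R)) * Gs K n k.
Proof.
move=> hnm hx.
have hxn : forall i, (i <= n)%N -> x + i%:R != 0.
  move=> i hi; apply: hx; lia.
rewrite (pfd _ hK _ _ hxn) (pfd _ hK _ _ hx).
rewrite [x * _]mulr_sumr mulr_suml.
rewrite (eq_bigr (fun j : 'I_n.+1 => \sum_(k < m.+1)
   ((if (j : nat) == k then aco K n j * aco K m j * ((x + j%:R)^-1 - j%:R / (x + j%:R) ^+ 2) else 0)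
   + (- j%:R * aco K n j / (x + j%:R)) * (if (k : nat) == j then 0 else aco K m k / (k%:R - j%:R))
   + (- k%:R * aco K m k / (x + k%:R)) * (if (j : nat) == k then 0 else aco K n j / (j%:R - k%:R))))).
  under eq_bigr => j _ do rewrite !big_split /=.
  rewrite !big_split /=.
  congr (_ + _ + _).
  - apply: eq_bigr => j _; apply: sum_if_pick.
    have := ltn_ord j; lia.
  - by apply: eq_bigr => j _; rewrite -mulr_sumr.
  - by rewrite exchange_big; apply: eq_bigr => k _; rewrite -mulr_sumr.
move=> j _; rewrite mulr_sumr; apply: eq_bigr => k _.
have hj : (j <= n)%N by rewrite -ltnS.
have hk : (k <= m)%N by rewrite -ltnS.
have h1 : x + j%:R != 0 by apply: hx; lia.
have h2 := hx k hk.
case: (eqVneq (j : nat) (k : nat)) => [e|ne].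
  rewrite e; move: h2; set Kk := (k%:R : K) => h2; field; by rewrite h2.
have h3 : j%:R - k%:R != (0 : K) by apply: subnz.
have h4 : k%:R - j%:R != (0 : K) by apply: subnz => //; rewrite eq_sym.
move: h1 h2 h3 h4; set J := (j%:R : K); set Kk := (k%:R : K) => h1 h2 h3 h4.
field; by rewrite h1 h2 h3 h4.
Qed.

Lemma cstF0 : cstF 0 = 0.
Proof. by rewrite /cstF rmorph0. Qed.
Lemma cstF1 : cstF 1 = 1.
Proof. by rewrite /cstF rmorph1. Qed.
Lemma cstFD a b : cstF (a + b) = cstF a + cstF b.
Proof. by rewrite /cstF polyCD rmorphD. Qed.
Lemma cstFM a b : cstF (a * b) = cstF a * cstF b.
Proof. by rewrite /cstF polyCM rmorphM. Qed.
Lemma cstFN a : cstF (- a) = - cstF a.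
Proof. by rewrite /cstF polyCN rmorphN. Qed.
Lemma cstFB a b : cstF (a - b) = cstF a - cstF b.
Proof. by rewrite cstFD cstFN. Qed.
Lemma cstFn k : cstF (k%:R) = k%:R.
Proof. by rewrite /cstF polyC_natr rmorph_nat. Qed.
Lemma cstFX a k : cstF (a ^+ k) = cstF a ^+ k.
Proof. elim: k => [|k IH]; by rewrite ?expr0 ?cstF1 // !exprS cstFM IH. Qed.
Lemma cstF_eq0 a : (cstF a == 0) = (a == 0).
Proof. by rewrite /cstF tofrac_eq0 polyC_eq0. Qed.
Lemma cstFV a : cstF (a^-1) = (cstF a)^-1.
Proof.
have [->|ha] := eqVneq a 0; first by rewrite invr0 cstF0 invr0.
have hz : cstF a != 0 by rewrite cstF_eq0.
apply: (mulfI hz); rewrite mulfV // -cstFM mulfV // cstF1.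
Qed.
Lemma cstF_sum (I : Type) (r : seq I) (P : pred I) (F : I -> rat) :
  cstF (\sum_(i <- r | P i) F i) = \sum_(i <- r | P i) cstF (F i).
Proof. exact: (big_morph cstF cstFD cstF0). Qed.

Lemma charzR : charz RatFun.
Proof.
move=> n.
have -> : (n.+1%:R : RatFun) = cstF n.+1%:R by rewrite cstFn.
by rewrite cstF_eq0 pnatr_eq0.
Qed.

Lemma xFnz (k : nat) : xF + k%:R != 0.
Proof.
rewrite -cstFn /xF /cstF -rmorphD tofrac_eq0.
by rewrite -size_poly_eq0 size_XaddC.
Qed.

Lemma harmE j : cstF (harm 1 j) = HK RatFun j.
Proof.
rewrite /harm big_add1 /= big_mkord cstF_sum /HK; apply: eq_bigr => i _.
by rewrite expr1 cstFV cstFn.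
Qed.

Lemma tail_nat n t :
  ('C(n + (n.+1 + t), n.+1 + t) * \prod_(i < n.+1) (t.+1 + i) =
   (n.+1 + t) * \prod_(i < n) ((n.+1 + t).+1 + i) * 'C((n.+1 + t).-1, n))%N.
Proof.
set k := (n.+1 + t)%N.
have e1 := rise_nat k n.
have e2 := rise_nat t n.+1.
have e3 := bin_fact (leq_addl n k).
have e4 := bin_fact (leq_addr t n).
have hk : k.-1 = (n + t)%N by rewrite /k addSn.
have hk2 : (t + n.+1 = k)%N by rewrite /k addnC.
rewrite hk2 in e2.
rewrite addnK in e3.
have hk3 : (n + t - n = t)%N by rewrite addKn.
rewrite hk3 in e4.
have hkf : k`! = (k * (n + t)`!)%N by rewrite /k addSn factS.
rewrite hk.
apply/eqP; rewrite -(eqn_pmul2r (fact_gt0 n)) -(eqn_pmul2r (fact_gt0 t))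
  -(eqn_pmul2r (fact_gt0 k)); apply/eqP.
have -> : ('C(n + k, k) * \prod_(i < n.+1) (t.+1 + i) * n`! * t`! * k`!
   = ('C(n + k, k) * (k`! * n`!)) * (\prod_(i < n.+1) (t.+1 + i) * t`!))%N by ring.
rewrite e3 e2.
have -> : (k * \prod_(i < n) (k.+1 + i) * 'C(n + t, n) * n`! * t`! * k`!
   = (\prod_(i < n) (k.+1 + i) * k`!) * (k * ('C(n + t, n) * (n`! * t`!))))%N by ring.
rewrite e1 e4 -hkf addnC; ring.
Qed.

Lemma aco_mul (K : fieldType) n m k :
  aco K n k * aco K m k = (('C(m + k, k) * 'C(m, k) * 'C(n + k, k) * 'C(n, k))%N)%:R.
Proof.
rewrite /aco mulrACA -exprMn mulrNN mulr1 expr1n mul1r -natrM; congr (_%:R); ring.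
Qed.

Lemma alg1 (K : fieldType) (X Kk a b h1 h2 h3 h4 h5 : K) : X + Kk != 0 ->
  a * b * (- Kk / (X + Kk) ^+ 2 + (1 + Kk * (h1 + h2 + h3 + h4 - 4 * h5)) / (X + Kk)) =
  a * b * ((X + Kk)^-1 - Kk / (X + Kk) ^+ 2)
  + - Kk * a / (X + Kk) * (- b * (h1 + h2 - 2 * h5))
  + - Kk * b / (X + Kk) * (- a * (h3 + h4 - 2 * h5)).
Proof. move=> h; field; exact: h. Qed.

Lemma alg2 (K : fieldType) (s u c1 c2 C Cp X k P1 P2 : K) :
  P2 != 0 -> Cp != 0 -> k != 0 -> u != 0 -> X + k != 0 -> C * P2 = k * P1 * Cp ->
  -1 * s * (c1 * c2 * C) / Cp / (X + k) = - k * (u * s * (c1 * c2)) / (X + k) * (P1 / (u * P2)).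
Proof.
move=> h1 h2 h3 h4 h5 E.
have -> : P1 = C * P2 / (k * Cp) by rewrite E; field; rewrite h3 h2.
field; by rewrite h1 h2 h3 h4 h5.
Qed.

Theorem theorem2p1 (m n : nat) (hn : (0 < n)%N) (hnm : (n <= m)%N) :
  \sum_(0 <= k < n.+1)
     cstF ((('C(m + k, k) * 'C(m, k) * 'C(n + k, k) * 'C(n, k))%N)%:R) *
     ( - (k%:R) / (xF + k%:R) ^+ 2
       + cstF (1 + k%:R * (harm 1 (m + k) + harm 1 (m - k) + harm 1 (n + k)
                            + harm 1 (n - k) - 4%:R * harm 1 k))
         / (xF + k%:R))
  + \sum_(n.+1 <= k < m.+1)
     cstF ((-1) ^+ (k - n) * (('C(m + k, k) * 'C(m, k) * 'C(n + k, k))%N)%:R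
           / ('C(k.-1, n))%:R) / (xF + k%:R)
  = xF * rising (1 - xF) n * rising (1 - xF) m
    / (rising xF n.+1 * rising xF m.+1).
Proof.
have hK := charzR.
have hx : forall i, (i <= m)%N -> xF + i%:R != 0 by move=> i _; exact: xFnz.
have -> : xF * rising (1 - xF) n * rising (1 - xF) m / (rising xF n.+1 * rising xF m.+1)
   = xF * ff RatFun n xF * ff RatFun m xF by rewrite /ff invfM; ring.
rewrite (prod_pfd _ hK _ _ _ hnm hx).
rewrite big_mkord.
have hnm' : (n.+1 <= m.+1)%N by [].
rewrite -(big_mkord xpredT (fun k => - k%:R * aco RatFun m k / (xF + k%:R) * Gs RatFun n k)).
rewrite (big_cat_nat (leq0n n.+1) hnm') big_mkord /=.
rewrite addrA; congr (_ + _).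
  rewrite -!big_split; apply: eq_bigr => k _.
  have hk : (k <= n)%N by rewrite -ltnS.
  change (Gs RatFun n k) with (Sd RatFun n k).
  have e1 := sid RatFun hK m k (leq_trans hk hnm).
  have e2 := sid RatFun hK n k hk.
  rewrite /= e1 e2.
  rewrite cstFn -(aco_mul RatFun n m k).
  rewrite !(cstFD, cstFM, cstFN, cstFn, cstF1, harmE).
  have h1 := xFnz k.
  move: h1; set X := xF; set Kk := (k%:R : RatFun) => h1.
  exact: alg1.
apply: eq_big_nat => k /andP[hk1 hk2].
have eG : Gs RatFun n k = ff RatFun n (- k%:R).
  have hy : forall i, (i <= n)%N -> - k%:R + i%:R != (0 : RatFun).
    move=> i hi; rewrite addrC; apply: subnz => //; rewrite neq_ltn; lia.
  rewrite (pfd _ hK _ _ hy) /Gs; apply: eq_bigr => j _.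
  have hj := ltn_ord j.
  rewrite ifF ?(addrC (- _)) //; apply/negbTE; rewrite neq_ltn; lia.
rewrite eG.
have [t ekt] : exists t, k = (n.+1 + t)%N by exists (k - n.+1)%N; lia.
subst k.
have -> : (n.+1 + t - n = t.+1)%N by lia.
rewrite /ff opprK nat1r rising_nat rising_neg.
have E := congr1 (fun z => z%:R : RatFun) (tail_nat n t).
rewrite /= !natrM in E.
rewrite !(cstFM, cstFV, cstFX, cstFN, cstF1, cstFn) /aco !natrM exprD exprS.
apply: alg2 => //.
- by apply: natnz => //; rewrite prodn_gt0.
- by apply: natnz => //; rewrite bin_gt0; lia.
- by apply: natnz => //; lia.
- by rewrite signr_eq0.
exact: xFnz.
Qed.
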